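(* Any distributed algorithm in the LOCAL model (deterministic, or randomized succeeding with high probability) that computes a proper $3$-coloring for every outerplanar graph on $n$ vertices requires $\Omega(n)$ communication rounds.
   Context: LOCAL model: the communication network is the input graph; each vertex has a unique identifier, computation proceeds in synchronous rounds in which each vertex receives messages sent in the previous round, does arbitrary local computation, and sends messages of unbounded size to its neighbors; randomized algorithms may additionally use random bits. The running time is the worst-case number of rounds; at the end each vertex outputs its color. A proper $3$-coloring assigns colors from $\{1,2,3\}$ so that adjacent vertices receive different colors. *)

(* Defs.v *)
From HB Require Import structures.
From mathcomp Require Import all_boot all_order all_algebra.
From mathcomp Require Import all_classical all_reals all_analysis.
Set Implicit Arguments. Unset Strict Implicit. Unset Printing Implicit Defensive.
Import Order.TTheory GRing.Theory Num.Theory.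
Local Open Scope classical_set_scope.
Local Open Scope ring_scope.

Definition simple_graph (n : nat) (E : rel 'I_n) : Prop :=
  symmetric E /\ irreflexive E.

(* Outerplanar: the graph has a drawing with all vertices on a circle
   (equivalently, all on the outer face) and edges as non-crossing chords.
   Vertices are placed on the circle in the order given by the injective
   position map [pos]; two chords ab, cd cross iff, in that linear order,
   pos a < pos c < pos b < pos d (up to renaming endpoints). *)
Definition outerplanar (n : nat) (E : rel 'I_n) : Prop :=
  exists pos : 'I_n -> nat, injective pos /\
    forall a b c d : 'I_n, E a b -> E c d ->
      ~ [/\ (pos a < pos c)%N, (pos c < pos b)%N & (pos b < pos d)%N].

Definition port_numbering (n : nat) (E : rel 'I_n) (port : 'I_n -> seq 'I_n) : Prop :=
  forall v, uniq (port v) /\ forall u, (u \in port v) = E v u.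

(* Proper 3-colouring with colours 'I_3 = {0,1,2} (standing for {1,2,3}). *)
Definition proper_3coloring (n : nat) (E : rel 'I_n) (col : 'I_n -> 'I_3) : Prop :=
  forall u v, E u v -> col u != col v.

(* In each synchronous round every vertex sends, through each of its ports,
   a message of arbitrary (unbounded) type computed from its current state,
   then updates its state (arbitrary local computation) from the list of
   messages received, listed in the order of its ports.
   A deterministic algorithm is one that ignores its random tape. *)
Record LocalAlgorithm := {
  la_state : Type;
  la_msg : Type;
  la_init : nat -> nat -> nat -> (nat -> bool) -> la_state;
    (* n, identifier, degree, random tape *)
  la_send : nat -> la_state -> nat -> la_msg;
    (* n, state, port index on which the message is sent *)
  la_step : nat -> la_state -> seq la_msg -> la_state;
  la_out : nat -> la_state -> 'I_3;
  la_rounds : nat -> nat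
}.

Fixpoint la_run (A : LocalAlgorithm) (n : nat) (id : 'I_n -> nat)
    (port : 'I_n -> seq 'I_n) (tape : 'I_n -> nat -> bool) (k : nat)
    : 'I_n -> la_state A :=
  match k with
  | 0 => fun v => @la_init A n (id v) (size (port v)) (tape v)
  | k'.+1 =>
      let s := @la_run A n id port tape k' in
      fun v => @la_step A n (s v)
                 [seq @la_send A n (s u) (index v (port u)) | u <- port v]
  end.

Definition la_output (A : LocalAlgorithm) (n : nat) (id : 'I_n -> nat)
    (port : 'I_n -> seq 'I_n) (tape : 'I_n -> nat -> bool) : 'I_n -> 'I_3 :=
  fun v => @la_out A n (la_run A id port tape (la_rounds A n) v).

(* X gives each vertex an infinite sequence of independent fair coin flips:
   every coordinate event is measurable and every finite set of distinct
   (vertex, index) coordinates takes any prescribed values with probability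
   2^-(number of coordinates). *)
Definition fair_random_tapes (R : realType) (d : measure_display)
    (T : measurableType d) (P : probability T R) (n : nat)
    (X : T -> 'I_n -> nat -> bool) : Prop :=
  (forall v i, measurable [set w | X w v i]) /\
  forall (s : seq ('I_n * nat)) (b : 'I_n * nat -> bool), uniq s ->
    P [set w | forall p, p \in s -> X w p.1 p.2 = b p]
      = ((2%:R : R) ^- size s)%:E.

(* Success is measured by inner
   probability (some measurable event of probability >= 1 - 1/n on which
   the output is proper), so no measurability of A is presupposed. *)
Definition whp_3colors_outerplanar (R : realType) (A : LocalAlgorithm) : Prop :=
  forall (n : nat) (E : rel 'I_n) (id : 'I_n -> nat) (port : 'I_n -> seq 'I_n),
    simple_graph E -> outerplanar E -> injective id -> port_numbering E port ->
    forall (d : measure_display) (T : measurableType d) (P : probability T R)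
           (X : T -> 'I_n -> nat -> bool),
      fair_random_tapes P X ->
      exists S : set T, [/\ measurable S,
        S `<=` [set w | proper_3coloring E (la_output A id port (X w))] &
        ((1 - (n%:R)^-1 : R)%:E <= P S)%E].

(* Main.v *)
Require Import Defs.
From HB Require Import structures.
From mathcomp Require Import all_boot all_order all_algebra.
From mathcomp Require Import all_classical all_reals all_analysis.
From mathcomp Require Import zify.
Set Implicit Arguments. Unset Strict Implicit. Unset Printing Implicit Defensive.
Import Order.TTheory GRing.Theory Num.Theory.
From mathcomp Require Import lra.
Definition cidx (m u : nat) : nat := if (u < m)%N then u else u.-1.
Definition near (x y : nat) : bool :=
  ((x < y) && (y <= x + 2))%N || ((y < x) && (x <= y + 2))%N.
Definition Eg (n m : nat) : rel 'I_n := fun u v =>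
  [&& val u != m, val v != m & near (cidx m u) (cidx m v)].
Arguments Eg n m u v : clear implicits.
Definition portg (n : nat) (E : rel 'I_n) (v : 'I_n) : seq 'I_n :=
  [seq u <- enum 'I_n | E v u].

Lemma Eg_simple n m : simple_graph (Eg n m).
Proof.
split.
- move=> u v; rewrite /Eg /near; case: (val u != m); case: (val v != m) => //=; lia.
- move=> u; rewrite /Eg /near; lia.
Qed.

Lemma portg_ok n (E : rel 'I_n) : port_numbering E (portg E).
Proof.
move=> v; split; first by rewrite filter_uniq // enum_uniq.
by move=> u; rewrite mem_filter mem_enum andbT.
Qed.

Definition zz (n c : nat) : nat := if odd c then (2 * n - c)%N else c.

Lemma zz_nocross n a b c d : (a < n)%N -> (b < n)%N -> (c < n)%N -> (d < n)%N ->
  near a b -> near c d ->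
  ~ [/\ (zz n a < zz n c)%N, (zz n c < zz n b)%N & (zz n b < zz n d)%N].
Proof.
rewrite /zz /near => ha hb hc hd.
have ea := odd_double_half a; have eb := odd_double_half b.
have ec := odd_double_half c; have ed := odd_double_half d.
case: (odd a) ea; case: (odd b) eb; case: (odd c) ec; case: (odd d) ed => /= ed ec eb ea;
 move=> Hab Hcd [H1 H2 H3]; lia.
Qed.

Lemma cidx_lt n m (u : 'I_n) : (cidx m u < n)%N.
Proof. rewrite /cidx; case: ifP => _; have := ltn_ord u; lia. Qed.

Lemma Eg_outerplanar n m : outerplanar (Eg n m).
Proof.
exists (fun u : 'I_n => if val u == m then (3 * n)%N else zz n (cidx m u)).
split.
- move=> u v /=; have hu := ltn_ord u; have hv := ltn_ord v.
  rewrite /zz /cidx => H; apply/val_inj => /=; move: H.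
  case: eqP => Hu; case: eqP => Hv; repeat (case: ifP => ?); lia.
- move=> a b c d /and3P[/negbTE -> /negbTE -> Hab] /and3P[/negbTE -> /negbTE -> Hcd].
  by apply: zz_nocross => //; apply: cidx_lt.
Qed.

Lemma tri3 (a b c d : 'I_3) : a != b -> b != c -> a != c -> d != b -> d != c -> d = a.
Proof.
case: a => [[|[|[|a]]] ha] //; case: b => [[|[|[|b]]] hb] //;
case: c => [[|[|[|c]]] hc] //; case: d => [[|[|[|d]]] hd] //;
by move=> *; apply/val_inj.
Qed.

Definition fv n m j : 'I_n.+1 := inord (if (j < m)%N then j else j.+1).

Lemma fv_edge n m L j d : (forall j, (j < L)%N -> ((if (j < m)%N then j else j.+1) <= n)%N) ->
  (j + d < L)%N -> (0 < d <= 2)%N -> Eg n.+1 m (fv n m j) (fv n m (j + d)).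
Proof.
move=> hL hj hd.
have h1 := hL j ltac:(lia). have h2 := hL (j + d) hj.
have v1 : val (fv n m j) = (if (j < m)%N then j else j.+1) by apply: inordK; rewrite ltnS.
have v2 : val (fv n m (j + d)) = (if (j + d < m)%N then (j + d)%N else (j + d).+1).
  by apply: inordK; rewrite ltnS.
have w1 : nat_of_ord (fv n m j) = (if (j < m)%N then j else j.+1) by exact: v1.
have w2 : nat_of_ord (fv n m (j + d)) = (if (j + d < m)%N then (j + d)%N else (j + d).+1) by exact: v2.
rewrite /Eg v1 v2 w1 w2; move: h1 h2; rewrite /cidx /near; repeat (case: ifP => ?); lia.
Qed.

Lemma chain_col n m L (col : 'I_n.+1 -> 'I_3) :
  (forall j, (j < L)%N -> ((if (j < m)%N then j else j.+1) <= n)%N) ->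
  proper_3coloring (Eg n.+1 m) col ->
  forall j, (j < L)%N -> col (fv n m j) = col (fv n m (j %% 3)).
Proof.
move=> hL hp j; elim: j {-2}j (leqnn j) => [|k IH] j hjk hjL.
  by have -> : j = 0%N by lia.
case: (ltnP j 3) => hj3; first by rewrite modn_small.
have [i Ei] : exists i, j = (i + 3)%N by exists (j - 3)%N; lia.
subst j; rewrite -modnDmr modnn addn0 -IH; [|lia|lia].
have e01 : col (fv n m i) != col (fv n m (i + 1)) by apply: hp; apply: (fv_edge hL); lia.
have e02 : col (fv n m i) != col (fv n m (i + 2)) by apply: hp; apply: (fv_edge hL); lia.
have e12 : col (fv n m (i + 1)) != col (fv n m (i + 2)).
  by have := hp _ _ (@fv_edge n m L (i + 1) 1 hL ltac:(lia) isT); rewrite -addnA.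
have e13 : col (fv n m (i + 1)) != col (fv n m (i + 3)).
  by have := hp _ _ (@fv_edge n m L (i + 1) 2 hL ltac:(lia) isT); rewrite -addnA.
have e23 : col (fv n m (i + 2)) != col (fv n m (i + 3)).
  by have := hp _ _ (@fv_edge n m L (i + 2) 1 hL ltac:(lia) isT); rewrite -addnA.
by apply: tri3 e01 e12 e02 _ _; rewrite eq_sym.
Qed.

Fixpoint agree n (p1 p2 : 'I_n -> seq 'I_n) (k : nat) (v : 'I_n) : Prop :=
  p1 v = p2 v /\
  match k with 0 => True | k'.+1 => forall u, u \in p1 v -> agree p1 p2 k' u end.

Lemma agree_mono n (p1 p2 : 'I_n -> seq 'I_n) k v : agree p1 p2 k.+1 v -> agree p1 p2 k v.
Proof.
elim: k v => [|k IH] v [h1 h2] /=; first by [].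
by split => // u /h2 /IH.
Qed.

Lemma agree_head n (p1 p2 : 'I_n -> seq 'I_n) k v : agree p1 p2 k v -> p1 v = p2 v.
Proof. by case: k => [|k] []. Qed.

Lemma run_agree (A : LocalAlgorithm) n (id : 'I_n -> nat) p1 p2 tape k v :
  agree p1 p2 k v -> la_run A id p1 tape k v = la_run A id p2 tape k v.
Proof.
elim: k v => [|k IH] v.
  by move=> [h _] /=; rewrite h.
move=> H; have Hk := agree_mono H; case: H => h1 h2 /=.
rewrite (IH v Hk) -h1; congr (la_step _ _ _).
apply/eq_in_map => u uin; have Hu := h2 u uin.
by rewrite (IH u Hu) (agree_head Hu).
Qed.

Lemma out_agree (A : LocalAlgorithm) n (id : 'I_n -> nat) p1 p2 tape v :
  agree p1 p2 (la_rounds A n) v -> la_output A id p1 tape v = la_output A id p2 tape v.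
Proof. by move=> H; rewrite /la_output (run_agree _ _ _ H). Qed.

Lemma port_eq N m (v : 'I_N) : ((v + 3 <= m) || (m + 3 <= v))%N ->
  portg (Eg N N) v = portg (Eg N m) v.
Proof.
move=> hv; apply: eq_filter => u; rewrite /Eg /=.
have hu := ltn_ord u; have hv' := ltn_ord v.
move: hv; rewrite /cidx /near; repeat (case: ifP => ?); lia.
Qed.

Lemma agree_left N m k (v : 'I_N) : (v + 2 * k + 3 <= m)%N ->
  agree (portg (Eg N N)) (portg (Eg N m)) k v.
Proof.
elim: k v => [|k IH] v hv /=.
  by split => //; apply: port_eq; lia.
split; first by apply: port_eq; lia.
move=> u; rewrite mem_filter mem_enum andbT => huv; apply: IH.
move: huv; rewrite /Eg /cidx /near /=; have := ltn_ord u; have := ltn_ord v.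
move: hv; repeat (case: ifP => ?); lia.
Qed.

Lemma agree_right N m k (v : 'I_N) : (m + 3 + 2 * k <= v)%N ->
  agree (portg (Eg N N)) (portg (Eg N m)) k v.
Proof.
elim: k v => [|k IH] v hv /=.
  by split => //; apply: port_eq; lia.
split; first by apply: port_eq; lia.
move=> u; rewrite mem_filter mem_enum andbT => huv; apply: IH.
move: huv; rewrite /Eg /cidx /near /=; have := ltn_ord u; have := ltn_ord v.
move: hv; repeat (case: ifP => ?); lia.
Qed.

Lemma mod3_pred n : (0 < n)%N -> (n %% 3 != n.-1 %% 3)%N.
Proof.
case: n => [|n] //= _.
rewrite -[n.+1]addn1 -modnDml; move: (ltn_pmod n (isT : (0 < 3)%N)).
by case: (n %% 3)%N => [|[|[|k]]].
Qed.

Lemma core (A : LocalAlgorithm) n m (tape : 'I_n.+1 -> nat -> bool) :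
  let r := la_rounds A n.+1 in
  (2 * r + 5 <= m)%N -> (m + 3 + 2 * r <= n)%N ->
  proper_3coloring (Eg n.+1 n.+1) (la_output A (fun v => val v) (portg (Eg n.+1 n.+1)) tape) ->
  proper_3coloring (Eg n.+1 m) (la_output A (fun v => val v) (portg (Eg n.+1 m)) tape) ->
  False.
Proof.
move=> r h1 h2 P1 P2.
set c1 := la_output _ _ _ _ in P1; set c2 := la_output _ _ _ _ in P2.
have L1 : forall j, (j < n.+1)%N -> ((if (j < n.+1)%N then j else j.+1) <= n)%N.
  by move=> j hj; rewrite hj.
have L2 : forall j, (j < n)%N -> ((if (j < m)%N then j else j.+1) <= n)%N.
  by move=> j hj; case: ifP => _; lia.
have A1 := chain_col L1 P1 (ltnSn n).
have A2 := @chain_col n m n _ L2 P2 n.-1 ltac:(lia).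
have fv1 : forall j, (j < n.+1)%N -> fv n n.+1 j = inord j.
  by move=> j hj; rewrite /fv hj.
have fv2 : forall j, (j < m)%N -> fv n m j = inord j.
  by move=> j hj; rewrite /fv hj.
have fv2' : fv n m n.-1 = inord n.
  by rewrite /fv ifF; [congr inord; lia | apply/negbTE; rewrite -leqNgt; lia].
have m3 : forall t, (t %% 3 < n.+1)%N.
  by move=> t; apply: (leq_trans (ltn_pmod t (isT : (0 < 3)%N))); lia.
have m3' : forall t, (t %% 3 < m)%N.
  by move=> t; apply: (leq_trans (ltn_pmod t (isT : (0 < 3)%N))); lia.
rewrite fv1 // fv1 // in A1.
rewrite fv2' fv2 // in A2.
have R : c1 (inord n) = c2 (inord n).
  apply: out_agree; apply: agree_right; rewrite inordK //; lia.
have Lf : forall t, (t < 3)%N -> c1 (inord t) = c2 (inord t).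
  move=> t ht; apply: out_agree; apply: agree_left; rewrite inordK; lia.
have E : c1 (inord (n %% 3)) = c1 (inord (n.-1 %% 3)).
  rewrite -A1 R A2 Lf //; exact: ltn_pmod.
have hne : (n %% 3 != n.-1 %% 3)%N.
  by apply: mod3_pred; lia.
have Ed : Eg n.+1 n.+1 (inord (n %% 3)) (inord (n.-1 %% 3)).
  rewrite /Eg /cidx /near /= !inordK //.
  move: hne (ltn_pmod n (isT : (0 < 3)%N)) (ltn_pmod n.-1 (isT : (0 < 3)%N)) (m3 n) (m3 n.-1).
  set a := (n %% 3)%N; set b := (n.-1 %% 3)%N.
  repeat (case: ifP => ?); lia.
by move: (P1 _ _ Ed); rewrite E eqxx.
Qed.
Section Count.
Lemma all_split T (f p : pred T) (L : seq T) :
  all f L = all f (seq.filter p L) && all f (seq.filter (predC p) L).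
Proof.
elim: L => //= x L ->; case: (p x) => /=; case: (f x) => //=.
by rewrite andbF.
Qed.

Lemma uniq_size_bound (T : eqType) (t : T -> nat) (L : seq T) M :
  uniq (map t L) -> all (fun x => t x < M) L -> size L <= M.
Proof.
move=> u a; rewrite -(size_map t) -(size_iota 0 M); apply: uniq_leq_size => //.
move=> y /mapP[x xL ->]; rewrite mem_iota /= add0n.
by move/allP: a => /(_ x xL).
Qed.

Lemma count_bits (T : eqType) (t : T -> nat) (b : T -> bool) M (L : seq T) :
  uniq (map t L) -> all (fun x => t x < M) L ->
  \sum_(0 <= k < 2 ^ M) (all (fun x => odd (k %/ 2 ^ t x) == b x) L : nat)
  = 2 ^ (M - size L).
Proof.
elim: M L => [|M IH] L u a.
  case: L u a => [|x L] //= _; by rewrite big_nat1.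
have sp : forall k, all (fun x => odd (k %/ 2 ^ t x) == b x) L = all (fun x => odd (k %/ 2 ^ t x) == b x) (seq.filter (fun x => t x < M) L)
   && all (fun x => odd (k %/ 2 ^ t x) == b x) (seq.filter (predC (fun x => t x < M)) L).
  by move=> k; rewrite (all_split _ (fun x => t x < M)).
set L1 := seq.filter _ L in sp; set L2 := seq.filter _ L in sp.
have u1 : uniq (map t L1) by exact: (subseq_uniq (map_subseq t (filter_subseq _ L)) u).
have a1 : all (fun x => t x < M) L1 by apply/allP => x; rewrite mem_filter => /andP[].
have a2 : forall x, x \in L2 -> t x = M.
  move=> x; rewrite mem_filter /= -leqNgt => /andP[h1 h2].
  by move/allP: a => /(_ x h2) /= h3; lia.
have sz : size L = (size L1 + size L2)%N.
  by rewrite /L1 /L2 !size_filter count_predC.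
have s1 := uniq_size_bound u1 a1.
rewrite expnS mul2n -addnn (big_cat_nat (n := 2 ^ M)) //=; last by rewrite leq_addr.
rewrite -{2}[2 ^ M]add0n big_addn addnK.
under eq_bigr => k _ do rewrite sp.
under [in X in (_ + X)%N]eq_bigr => k _ do rewrite sp.
have lo : forall k, k < 2 ^ M -> all (fun x => odd (k %/ 2 ^ t x) == b x) L2 = all (fun x => ~~ b x) L2.
  move=> k hk; apply: eq_in_all => x /a2 ->; rewrite divn_small //.
have hi : forall k, k < 2 ^ M -> all (fun x => odd ((k + 2 ^ M) %/ 2 ^ t x) == b x) L2 = all b L2.
  move=> k hk; apply: eq_in_all => x /a2 ->.
  rewrite divnDr ?dvdnn // divnn expn_gt0 /= divn_small // addn1 /=.
have lo1 : forall k, all (fun x => odd ((k + 2 ^ M) %/ 2 ^ t x) == b x) L1 = all (fun x => odd (k %/ 2 ^ t x) == b x) L1.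
  move=> k; apply: eq_in_all => x; rewrite mem_filter => /andP[hx _].
  rewrite divnDr; last by apply: dvdn_exp2l; lia.
  rewrite -expnB ?(ltnW hx) // oddD oddX /=.
  have -> : (M - t x == 0) = false by lia.
  by rewrite /= addbF.
rewrite big_nat_cond [in X in (_ + X)%N]big_nat_cond.
under eq_bigr => k /andP[/andP[_ hk] _] do rewrite lo //.
under [in X in (_ + X)%N]eq_bigr => k /andP[/andP[_ hk] _] do rewrite hi // lo1.
rewrite -!big_nat_cond.
have A0 : forall (f : pred T), all f [::] = true by [].
have A1 : forall (f : pred T) z, all f [:: z] = f z by move=> f z /=; rewrite andbT.
case E2 : L2 sz a2 => [|x [|y L2']] sz a2.
- rewrite !A0; under eq_bigr => ? _ do rewrite andbT.
  rewrite IH // addnn -mul2n -expnS sz /= addn0; congr (2 ^ _); lia.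
- rewrite !A1.
  case: (b x) => /=.
  + rewrite big1 ?add0n; last by move=> *; rewrite andbF.
    under eq_bigr => ? _ do rewrite andbT.
    by rewrite IH // sz /=; congr (2 ^ _); lia.
  + rewrite [X in (_ + X)%N]big1 ?addn0; last by move=> *; rewrite andbF.
    under eq_bigr => ? _ do rewrite andbT.
    by rewrite IH // sz /=; congr (2 ^ _); lia.
- exfalso.
  have hx : x \in L2 by rewrite E2 inE eqxx.
  have hy : y \in L2 by rewrite E2 !inE eqxx orbT.
  have u2 : uniq (map t L2) by exact: (subseq_uniq (map_subseq t (filter_subseq _ L)) u).
  move: u2; rewrite E2 /= (a2 x) ?(a2 y) ?inE ?eqxx ?orbT //.
Qed.

End Count.

Local Open Scope classical_set_scope.
Local Open Scope ring_scope.

Section Slab.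
Variable R : realType.
Local Notation mu := (@lebesgue_measure R).

Definition slab (N K : nat) (g : nat -> bool) : set R :=
  [set w | 0 <= w /\ w * N%:R < K%:R /\ g (Num.truncn (w * N%:R))].

Lemma slab_meas N g K : (0 < N)%N ->
  measurable (slab N K g) /\
  mu (slab N K g) = (((\sum_(k < K) (g k : nat))%N)%:R / N%:R)%:E.
Proof.
move=> N0; have N0' : (0 < N%:R :> R) by rewrite ltr0n.
elim: K => [|K [IHm IHe]].
  have -> : slab N 0 g = set0.
    apply/seteqP; split => // w [w0 [wN _]].
    by move: wN; rewrite ltNge mulr_ge0 // ler0n.
  by rewrite big_ord0 mul0r measure0.
pose I : set R := if g K then `[K%:R / N%:R, K.+1%:R / N%:R[%classic else set0.
have mI : measurable I by rewrite /I; case: (g K) => //; exact: measurable_itv.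
have eq : slab N K.+1 g = slab N K g `|` I.
  apply/seteqP; split => w.
  - move=> [w0 [wN gw]].
    case: (ltP (w * N%:R) K%:R) => hK; first by left.
    right; have tK : Num.truncn (w * N%:R) = K by apply: truncn_def; rewrite hK.
    rewrite /I -tK gw tK /= in_itv /= ler_pdivrMr // ltr_pdivlMr // hK /=.
    by [].
  - case.
      move=> [w0 [wN gw]]; split => //; split => //.
      by apply: (lt_le_trans wN); rewrite ler_nat.
    rewrite /I; case E: (g K) => //=; rewrite in_itv /= ler_pdivrMr // ltr_pdivlMr //.
    move=> /andP[h1 h2].
    have w0 : 0 <= w.
      by rewrite -(pmulr_lge0 _ N0'); apply: le_trans h1.
    split => //; split => //.
    by rewrite (truncn_def (n := K)) ?E // h1 h2.
have dis : slab N K g `&` I = set0.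
  apply/seteqP; split => // w [[w0 [wN _]]]; rewrite /I; case: (g K) => //=.
  by rewrite in_itv /= ler_pdivrMr // => /andP[h _]; move: wN; rewrite ltNge h.
rewrite eq; split; first exact: measurableU.
apply: (eq_trans (measureU mu IHm mI dis)).
apply: (eq_trans (congr2 (fun a b => (a + b)%E) IHe (erefl (mu I)))).
rewrite big_ord_recr /= natrD mulrDl.
rewrite /I; case: (g K) => /=; last by rewrite mul0r addr0 measure0 adde0.
rewrite lebesgue_measure_itv /= lte_fin ltr_pM2r ?invr_gt0 // ltr_nat ltnSn.
rewrite -!EFinD; congr (_%:E); congr (_ + _).
by rewrite -mulrBl -natrB // subSnn.
Qed.
End Slab.

Section Fair.
Variable R : realType.
Local Notation mu := (@lebesgue_measure R).

Lemma truncn_divn (x : R) d : 0 <= x -> (0 < d)%N ->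
  Num.truncn (x / d%:R) = (Num.truncn x %/ d)%N.
Proof.
move=> x0 d0; have d0' : (0 < d%:R :> R) by rewrite ltr0n.
apply: truncn_def; rewrite ler_pdivlMr // ltr_pdivrMr // -!natrM.
have /andP[t1 t2] := truncn_itv x0.
apply/andP; split.
  by apply: le_trans t1; rewrite ler_nat leq_trunc_div.
by apply: (lt_le_trans t2); rewrite ler_nat ltn_ceil.
Qed.

Definition enc n (p : 'I_n * nat) : nat := (p.2 * n + p.1)%N.

Lemma enc_inj n : injective (@enc n).
Proof.
move=> [a i] [c j]; rewrite /enc /= => E.
have n0 : (0 < n)%N by case: n a {E c} => [[]|].
have h1 : i = j.
  by move: (congr1 (divn^~ n) E); rewrite !divnMDl // !divn_small ?addn0.
have h2 : (a : nat) = c.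
  by move: (congr1 (modn^~ n) E); rewrite !modnMDl !modn_small.
by rewrite h1; congr pair; apply: val_inj.
Qed.

Definition bitr (j : nat) (w : R) : bool := odd (Num.truncn (w * (2 ^ j.+1)%:R)).

Definition Xt n (w : R) (v : 'I_n) (i : nat) : bool :=
  (0 <= w) && (w < 1) && bitr (enc (v, i)) w.

Lemma bitr_div j M w : (j < M)%N -> 0 <= w ->
  bitr j w = odd (Num.truncn (w * (2 ^ M)%:R) %/ 2 ^ (M - j.+1)).
Proof.
move=> jM w0; rewrite /bitr -truncn_divn ?expn_gt0 //; last first.
  by rewrite mulr_ge0 // ler0n.
have -> : (2 ^ M = 2 ^ j.+1 * 2 ^ (M - j.+1))%N by rewrite -expnD subnKC.
rewrite natrM mulrA mulfK // pnatr_eq0 -lt0n expn_gt0.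
Qed.

Lemma Xt_meas n (v : 'I_n) (i : nat) : measurable [set w : R | Xt w v i].
Proof.
set j := enc (v, i).
have -> : [set w : R | Xt w v i] = @slab R (2 ^ j.+1) (2 ^ j.+1) odd.
  apply/seteqP; split => w; rewrite /Xt /slab /bitr -/j /=.
    move=> /andP[/andP[w0 w1] h]; split => //; split => //.
    by rewrite -[X in _ < X]mul1r ltr_pM2r // ltr0n expn_gt0.
  move=> [w0 [w1 h]]; rewrite w0 h andbT /=.
  by move: w1; rewrite -[X in _ < X -> _]mul1r ltr_pM2r // ltr0n expn_gt0.
by case: (@slab_meas R (2 ^ j.+1) odd (2 ^ j.+1) (expn_gt0 2 j.+1)).
Qed.

Lemma sumn_ge_mem (T : eqType) (f : T -> nat) (s : seq T) x : x \in s -> (f x <= sumn (map f s))%N.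
Proof.
elim: s => //= y s IH; rewrite inE => /orP[/eqP ->|/IH h]; first exact: leq_addr.
exact: (leq_trans h (leq_addl _ _)).
Qed.

Lemma size_le_sumn (T : Type) (f : T -> nat) (s : seq T) : (forall x, 0 < f x)%N -> (size s <= sumn (map f s))%N.
Proof. by move=> h; elim: s => //= y s IH; have := h y; lia. Qed.

Lemma fair_cyl n (s : seq ('I_n * nat)) (b : 'I_n * nat -> bool) : uniq s ->
  uniform_prob (@ltr01 R) [set w | forall p, p \in s -> Xt w p.1 p.2 = b p]
  = ((2%:R : R) ^- size s)%:E.
Proof.
move=> us; set C := [set w | _].
pose M := sumn [seq (enc p).+1 | p <- s].
have encM : forall p, p \in s -> (enc p < M)%N by move=> p ps; exact: (sumn_ge_mem (fun p => (enc p).+1) ps).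
pose g := fun k => all (fun p => odd (k %/ 2 ^ (M - (enc p).+1)) == b p) s.
have char : forall w : R, 0 <= w -> w < 1 -> C w <-> g (Num.truncn (w * (2 ^ M)%:R)).
  move=> w w0 w1; rewrite /C /g /=; split.
  - move=> H; apply/allP => p ps; apply/eqP; rewrite -bitr_div ?encM //.
    by rewrite -(H p ps) /Xt w0 w1 /= -surjective_pairing.
  - move=> /allP H p ps; rewrite /Xt w0 w1 /= -surjective_pairing.
    by move/eqP: (H p ps) => <-; rewrite -bitr_div ?encM.
have M0 : (0 < 2 ^ M)%N by rewrite expn_gt0.
have M0' : (0 < (2 ^ M)%:R :> R) by rewrite ltr0n.
pose G := @slab R (2 ^ M) (2 ^ M) g.
have [mG muG] := @slab_meas R (2 ^ M) g (2 ^ M) M0.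
pose Z := C `&` [set (1 : R)].
have mZ : measurable Z.
  have [C1|nC1] := pselect (C 1).
  - have -> : Z = [set 1] by apply/seteqP; split => w; [case=> _ -> | move=> -> ].
    exact: measurable_set1.
  - have -> : Z = set0 by apply/seteqP; split => w // [Cw w1]; apply: nC1; rewrite -w1.
    exact: measurable0.
have muZ : mu Z = 0.
  have : (mu Z <= mu [set (1%R : R)])%E.
    by apply: le_measure; rewrite ?inE //= => w [_ ->].
  by rewrite lebesgue_measure_set1 measure_le0 => /eqP.
have eqD : C `&` `[0, 1] = G `|` Z.
  apply/seteqP; split => w.
  - move=> [Cw]; rewrite /= in_itv /= => /andP[w0 w1].
    case: (ltP w 1) => hw.
    + left; split => //; split; last by apply/char.
      by rewrite -[X in _ < X]mul1r ltr_pM2r.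
    + by right; split => //; apply/le_anti; rewrite w1 hw.
  - case.
    + move=> [w0 [w1 gw]].
      have w1' : w < 1 by move: w1; rewrite -[X in _ < X -> _]mul1r ltr_pM2r.
      split; first by apply/char.
      by rewrite /= in_itv /= w0 ltW.
    + move=> [Cw] /= e; split => //; rewrite e /= in_itv /= ler01 lexx //.
have mD : measurable (C `&` `[0, 1]) by rewrite eqD; exact: measurableU.
have dis : G `&` Z = set0.
  apply/seteqP; split => // w [[w0 [w1 _]] [_ e]]; move: w1; rewrite e mul1r ltxx.
  by [].
rewrite /uniform_prob integral_uniform_pdf.
rewrite (eq_integral (cst 1%:E)); last first.
  move=> x; rewrite inE => -[_]; rewrite /= in_itv /uniform_pdf /= => ->.
  by rewrite subr0 invr1.
rewrite integral_cst // mul1e eqD.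
apply: (eq_trans (measureU mu mG mZ dis)).
apply: (eq_trans (congr2 (fun a b => (a + b)%E) muG muZ)); rewrite adde0.
have hk : (size s <= M)%N by apply: size_le_sumn.
have cnt : (\sum_(0 <= k < 2 ^ M) (g k : nat))%N = (2 ^ (M - size s))%N.
  apply: (@count_bits _ (fun p => M - (enc p).+1)%N b M s).
  - rewrite map_inj_in_uniq // => p q ps qs /= e.
    apply: enc_inj; have := encM p ps; have := encM q qs; lia.
  - by apply/allP => p ps /=; have := encM p ps; lia.
have cnt' : (\sum_(k < 2 ^ M) (g k : nat))%N = (2 ^ (M - size s))%N by rewrite -cnt big_mkord.
rewrite cnt'; congr (_%:E).
rewrite !natrX.
have hM : (2%:R : R) ^+ M = 2%:R ^+ (M - size s) * 2%:R ^+ size s by rewrite -exprD subnK.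
by rewrite hM invfM mulrA mulfV ?mul1r // expf_neq0 // pnatr_eq0.
Qed.

End Fair.

Lemma arith_contra (R : realType) (x : R) : x < 2^-1 -> (1 - x) + (1 - x) <= 1 -> False.
Proof. move=> h1 h2; lra. Qed.

Lemma fair_tapes (R : realType) n :
  fair_random_tapes (uniform_prob (@ltr01 R)) (@Xt R n).
Proof.
split; first by move=> v i; exact: Xt_meas.
by move=> s b us; exact: fair_cyl.
Qed.

Theorem corollary6p11 (R : realType) (A : LocalAlgorithm) :
  whp_3colors_outerplanar R A ->
  exists k N : nat, (0 < k)%N /\ forall n : nat, (N <= n)%N -> (n <= k * la_rounds A n)%N.
Proof.
move=> H; exists 15%N, 40%N; split => // n hn.
rewrite leqNgt; apply/negP => hlt.
case: n hn hlt => [|n] // hn hlt.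
set r := la_rounds A n.+1 in hlt.
pose m := (2 * r + 5)%N.
have h1 : (2 * r + 5 <= m)%N by [].
have h2 : (m + 3 + 2 * r <= n)%N by rewrite /m; lia.
have fair := fair_tapes R n.+1.
have [S1 [mS1 sub1 p1]] := H n.+1 (Eg n.+1 n.+1) (fun v => val v) (portg (Eg n.+1 n.+1))
  (Eg_simple _ _) (Eg_outerplanar _ _) val_inj (portg_ok _) _ _ _ _ fair.
have [S2 [mS2 sub2 p2]] := H n.+1 (Eg n.+1 m) (fun v => val v) (portg (Eg n.+1 m))
  (Eg_simple _ _) (Eg_outerplanar _ _) val_inj (portg_ok _) _ _ _ _ fair.
have dis : S1 `&` S2 = set0.
  apply/seteqP; split => // w [/sub1 a /sub2 b].
  exact: (core h1 h2 a b).
have le1 : (uniform_prob (@ltr01 R) (S1 `|` S2) <= 1)%E by apply: probability_le1; exact: measurableU.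
have eU := measureU (uniform_prob (@ltr01 R)) mS1 mS2 dis.
rewrite eU in le1.
have h := leeD p1 p2.
have := le_trans h le1; rewrite -EFinD lee_fin => hh.
have hx : (n.+1%:R : R)^-1 < 2^-1.
  by rewrite ltf_pV2 ?posrE ?ltr0n // ltr_nat; lia.
exact: (arith_contra hx hh).
Qed.
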